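(* Let $h=\hat h\circ\tilde h:\Sigma^c\to\mathcal R$ be a random tornado tabulation hash function with $d$ derived characters, query keys $Q$ and selector function $f$. Let $\mathcal I_{X^{f,h}}$ denote the event that the set of derived selected keys $\tilde h(X^{f,h})$ is linearly independent. Then for any $\delta>0$, $$\Pr\left[|X^{f,h}|\ge(1+\delta)\mu^f\ \wedge\ \mathcal I_{X^{f,h}}\right]\le\left(\frac{e^\delta}{(1+\delta)^{1+\delta}}\right)^{\mu^f}.$$
   Context: Let $\Sigma=\{0,1,\dots,2^k-1\}$, identified with $k$-bit strings, $\oplus$ bitwise xor; throughout $|\Sigma|\ge2^8$; $\mathcal R=\{0,\dots,2^r-1\}$. A simple tabulation hash function $g:\Sigma^b\to\mathcal R'$ is $g(x_1\cdots x_b)=T_1[x_1]\oplus\cdots\oplus T_b[x_b]$ with independent fully random tables $T_i:\Sigma\to\mathcal R'$. A random tornado tabulation hash function $h:\Sigma^c\to\mathcal R$ with $d\ge1$ derived characters consists of mutually independent simple tabulation functions $\tilde h_i:\Sigma^{c+i-1}\to\Sigma$ ($i=0,\dots,d$) and $\hat h:\Sigma^{c+d}\to\mathcal R$; the derived key of $x=x_1\cdots x_c$ is $\tilde h(x)=\tilde x_1\cdots\tilde x_{c+d}$ with $\tilde x_i=x_i$ ($i<c$), $\tilde x_c=x_c\oplus\tilde h_0(\tilde x_1\cdots\tilde x_{c-1})$, $\tilde x_i=\tilde h_{i-c}(\tilde x_1\cdots\tilde x_{i-1})$ ($c<i\le c+d$); $h(x)=\hat h(\tilde h(x))$. A selector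 function with query keys $Q\subseteq\Sigma^c$ is $f:\Sigma^c\times\mathcal R\times\mathcal R^Q\to\{0,1\}$ with $f(q,\cdot,\cdot)=1$ for $q\in Q$; $X^{f,h}=\{x\in\Sigma^c: f(x,h(x),h|_Q)=1\}$; $p^f_x=\max_{\varphi\in\mathcal R^Q}\Pr_{r\sim\mathcal U(\mathcal R)}[f(x,r,\varphi)=1]$; $\mu^f=\sum_{x\in\Sigma^c}p^f_x$. A set $Y\subseteq\Sigma^b$ is linearly dependent if some nonempty $Y'\subseteq Y$ has, at every position, every character appearing an even number of times among the keys of $Y'$; otherwise linearly independent. *)

(* Defs.v *)
From HB Require Import structures.
From mathcomp Require Import all_boot all_order all_algebra.
From mathcomp Require Import reals exp sequences.
Set Implicit Arguments. Unset Strict Implicit. Unset Printing Implicit Defensive.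
Import Order.TTheory GRing.Theory Num.Theory.
Local Open Scope ring_scope.

(* Characters: k-bit strings, represented as row vectors over F_2;
   bitwise xor is the addition (+) of 'rV['F_2]_k. *)
Definition Sig (k : nat) : finType := 'rV['F_2]_k.

Definition Key (k c : nat) : finType := {ffun 'I_c -> Sig k}.

Definition simple_tab (k b : nat) (V : zmodType) (T : {ffun 'I_b -> {ffun Sig k -> V}})
  (s : seq (Sig k)) : V :=
  \sum_(j < b) T j (nth 0 s j).

(* The random choices of a tornado tabulation function with d derived characters:
   the tables of tilde h_i : Sigma^(c+i-1) -> Sigma (i = 0..d) and of
   hat h : Sigma^(c+d) -> R (R = r-bit strings). *)
Definition Omega (k r c d : nat) : finType :=
  ({dffun forall i : 'I_d.+1, {ffun 'I_(c + i - 1) -> {ffun Sig k -> Sig k}}} *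
   {ffun 'I_(c + d) -> {ffun Sig k -> Sig r}})%type.

Section Tornado.
Variables (k r c d : nat).

Definition derived_seq (w : Omega k r c d) (x : Key k c) : seq (Sig k) :=
  let xs := [seq x j | j <- enum 'I_c] in
  let pre := take c.-1 xs in
  let s0 := rcons pre (nth 0 xs c.-1 + simple_tab (w.1 ord0) pre) in
  let fix ext (n : nat) : seq (Sig k) :=
    match n with
    | 0 => s0
    | n'.+1 => let s' := ext n' in
               rcons s' (simple_tab (w.1 (inord n)) s')
    end in
  ext d.

Definition derived_key (w : Omega k r c d) (x : Key k c) : {ffun 'I_(c + d) -> Sig k} :=
  [ffun i : 'I_(c + d) => nth 0 (derived_seq w x) i].

Definition tornado (w : Omega k r c d) (x : Key k c) : Sig r :=
  simple_tab w.2 (derived_seq w x).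

Variable Q : {set Key k c}.
Variable f : Key k c -> Sig r -> {ffun {x : Key k c | x \in Q} -> Sig r} -> bool.

Definition restrQ (w : Omega k r c d) : {ffun {x : Key k c | x \in Q} -> Sig r} :=
  [ffun q => tornado w (val q)].

Definition selected (w : Omega k r c d) : {set Key k c} :=
  [set x | f x (tornado w x) (restrQ w)].

Definition p_sel (R : realType) (x : Key k c) : R :=
  (\max_(phi : {ffun {x : Key k c | x \in Q} -> Sig r}) #|[set y : Sig r | f x y phi]|)%:R
  / #|Sig r|%:R.

Definition mu_sel (R : realType) : R := \sum_(x : Key k c) p_sel R x.

End Tornado.

Definition lin_dep (k b : nat) (Y : {set {ffun 'I_b -> Sig k}}) : bool :=
  [exists Y' : {set {ffun 'I_b -> Sig k}},
     [&& Y' \subset Y, Y' != set0 &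
         [forall i : 'I_b, forall a : Sig k, ~~ odd #|[set y in Y' | y i == a]|]]].

Definition lin_indep (k b : nat) (Y : {set {ffun 'I_b -> Sig k}}) : bool :=
  ~~ lin_dep Y.

Definition Pr (R : realType) (T : finType) (E : pred T) : R :=
  #|[set w | E w]|%:R / #|T|%:R.

(* Main.v *)
Require Import Defs.
From HB Require Import structures.
From mathcomp Require Import all_boot all_order all_algebra.
From mathcomp Require Import reals exp sequences.
Import Order.TTheory GRing.Theory Num.Theory.
Local Open Scope ring_scope.
Set Implicit Arguments. Unset Strict Implicit. Unset Printing Implicit Defensive.
From mathcomp Require Import lra ring.
Lemma F2_cases (x : 'F_2) : x = 0 \/ x = 1.
Proof. by case: x => -[|[|m]] H; [left; apply/eqP|right; apply/eqP|]. Qed.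

Lemma F2_nat0 n : (n%:R : 'F_2) = 0 -> ~~ odd n.
Proof. by move/(congr1 (@nat_of_ord _)); rewrite val_Fp_nat // modn2; case: (odd n). Qed.

Lemma lin_indep_sub k b (Y Z : {set {ffun 'I_b -> Sig k}}) :
  Y \subset Z -> lin_indep Z -> lin_indep Y.
Proof.
move=> sYZ; apply: contra => /existsP[Y' /and3P[sY' nz ev]].
by apply/existsP; exists Y'; rewrite nz ev (subset_trans sY' sYZ).
Qed.

Section LA.
Variables (k b : nat).
Local Notation KT := {ffun 'I_b -> Sig k}.
Local Notation T := (('I_b * Sig k)%type : finType).

Lemma dual_vec (D : {set KT}) y : lin_indep D -> y \in D ->
  exists eps : 'I_b -> Sig k -> 'F_2,
    forall z, z \in D -> \sum_j eps j (z j) = (z == y)%:R.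
Proof.
move=> hind Hy.
pose M : 'M['F_2]_(#|D|, #|T|) := \matrix_(i, j)
   (((enum_val j : T).2 == (enum_val i : KT) (enum_val j : T).1)%:R).
have rf : row_free M.
  rewrite -kermx_eq0; apply/negPn/negP => nz; move/negP: hind; apply.
  have [i0 ri0] : exists i, row i (kermx M) != 0.
    apply/existsP; apply: contraR nz; rewrite negb_exists => /forallP H.
    by apply/eqP/row_matrixP => i; rewrite row0; apply/eqP; move: (H i); rewrite negbK.
  set u := row i0 (kermx M).
  have uM : u *m M = 0 by rewrite /u -row_mul mulmx_ker row0.
  have [j0 uj0] : exists j, u 0 j != 0.
    apply/existsP; apply: contraR ri0; rewrite negb_exists => /forallP H.
    apply/eqP/rowP => j; move: (H j); rewrite negbK => /eqP.
    by rewrite !mxE.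
  pose Y' := [set (enum_val i : KT) | i in [pred i | u 0 i != 0]].
  apply/existsP; exists Y'; apply/and3P; split.
  - by apply/subsetP => _ /imsetP[i _ ->]; apply: enum_valP.
  - by apply/set0Pn; exists (enum_val j0); apply/imsetP; exists j0.
  apply/forallP => j; apply/forallP => a.
  move/matrixP/(_ 0 (enum_rank (j, a))): uM; rewrite mxE [RHS]mxE.
  under eq_bigr => i _ do rewrite [M i _]mxE enum_rankK /=.
  have -> : \sum_i u 0 i * (a == (enum_val i : KT) j)%:R =
      (#|[set i | (u 0 i != 0) && ((enum_val i : KT) j == a)]|)%:R.
    have -> : #|[set i | (u 0 i != 0) && ((enum_val i : KT) j == a)]| =
        (\sum_(i | (u ord0 i != 0%R) && ((enum_val i : KT) j == a)) 1)%N.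
      by rewrite sum1_card; apply: eq_card => i; rewrite inE.
    rewrite natr_sum [RHS]big_mkcond /=; apply: eq_bigr => i _.
    rewrite eq_sym; case: (F2_cases (u 0 i)) => ->; rewrite ?eqxx ?mul0r //=.
    by rewrite mul1r; case: (_ == _).
  move/F2_nat0; suff -> : [set y in Y' | y j == a] =
      (fun i => enum_val i : KT) @: [set i | (u 0 i != 0) && ((enum_val i : KT) j == a)].
    by rewrite card_imset //; apply: enum_val_inj.
  apply/setP => z; rewrite inE; apply/andP/imsetP.
  - by case=> /imsetP[i Hi ->] Ha; exists i; rewrite // inE Ha andbT.
  - by case=> i; rewrite inE => /andP[Hi Ha] ->; split=> //; apply/imsetP; exists i.
have [B MB] := row_freeP rf.
pose iy := enum_rank_in Hy y.
exists (fun j a => B (enum_rank ((j, a) : T)) iy) => z Hz.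
move/matrixP/(_ (enum_rank_in Hy z) iy): MB; rewrite !mxE.
have -> : (enum_rank_in Hy z == iy) = (z == y).
  apply/eqP/eqP => [E|->//]; by rewrite -(enum_rankK_in Hy Hz) E enum_rankK_in.
move=> <-; apply/esym.
under eq_bigr => col _ do rewrite [M _ col]mxE (enum_rankK_in Hy Hz).
rewrite (reindex (@enum_rank T)) /=; last by apply: onW_bij; apply: enum_rank_bij.
under eq_bigr => p _ do rewrite enum_rankK.
rewrite (eq_bigr (fun p : T => (p.2 == z p.1)%:R * B (enum_rank ((p.1, p.2) : T)) iy)); last by case.
rewrite -(pair_bigA _ (fun j a => (a == z j)%:R * B (enum_rank ((j, a) : T)) iy)) /=.
apply: eq_bigr => j _.
rewrite (bigD1 (z j)) //= eqxx mul1r big1 ?addr0 // => a /negbTE ->.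
by rewrite mul0r.
Qed.
End LA.

Lemma ext_prefix (T : Type) (x0 : T) (e : nat -> seq T) s0 :
  e 0%N = s0 -> (forall n, exists a, e n.+1 = rcons (e n) a) ->
  forall n, size (e n) = (size s0 + n)%N /\
    forall j, (j < size s0)%N -> nth x0 (e n) j = nth x0 s0 j.
Proof.
move=> e0 eS; elim=> [|n [Hs Hn]]; first by rewrite e0 addn0.
have [a ->] := eS n; rewrite size_rcons Hs addnS; split=> // j Hj.
by rewrite nth_rcons Hs (leq_trans Hj (leq_addr _ _)) Hn.
Qed.

Section Tor.
Variables (k r c d : nat).
Hypothesis hc : (0 < c)%N.

Lemma derived_seq_prefix (w : Omega k r c d) (x : Key k c) (j : nat) : (j < c)%N ->
  nth 0 (derived_seq w x) j =
  nth 0 (rcons (take c.-1 [seq x i | i <- enum 'I_c])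
     (nth 0 [seq x i | i <- enum 'I_c] c.-1 +
        simple_tab (w.1 ord0) (take c.-1 [seq x i | i <- enum 'I_c]))) j.
Proof.
move=> Hj; rewrite /derived_seq.
match goal with |- nth _ (?E d) _ = nth _ ?S _ => 
  have [_ ->] := @ext_prefix _ 0 E S erefl (fun n => ex_intro _ _ erefl) d end => //.
by rewrite size_rcons size_take size_map size_enum_ord prednK //; case: c hc Hj => // n _; rewrite /= ltnSn.
Qed.

Lemma nth_keyseq (x : Key k c) (i : 'I_c) : nth 0 [seq x i | i <- enum 'I_c] i = x i.
Proof. by rewrite (nth_map i) ?size_enum_ord // nth_ord_enum. Qed.

Lemma derived_key_inj (w : Omega k r c d) : injective (derived_key w).
Proof.
move=> x y /ffunP E.
set xs := [seq x i | i <- enum 'I_c]; set ys := [seq y i | i <- enum 'I_c].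
have sz (z : Key k c) : size (rcons (take c.-1 [seq z i | i <- enum 'I_c])
     (nth 0 [seq z i | i <- enum 'I_c] c.-1 +
        simple_tab (w.1 ord0) (take c.-1 [seq z i | i <- enum 'I_c]))) = c.
  rewrite size_rcons size_take size_map size_enum_ord prednK //.
  by case: c hc => // n _; rewrite /= ltnSn.
have /rcons_inj [TE LE] : rcons (take c.-1 xs) (nth 0 xs c.-1 + simple_tab (w.1 ord0) (take c.-1 xs)) =
    rcons (take c.-1 ys) (nth 0 ys c.-1 + simple_tab (w.1 ord0) (take c.-1 ys)).
  apply: (eq_from_nth (x0 := 0)); first by rewrite !sz.
  rewrite sz => j Hj.
  have := E (widen_ord (leq_addr d c) (Ordinal Hj)); rewrite !ffunE /=.
  by rewrite !derived_seq_prefix.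
move: LE; rewrite TE => /addIr LE.
apply/ffunP => i; rewrite -!nth_keyseq -/xs -/ys.
case: (ltnP i c.-1) => Hi; first by rewrite -(nth_take 0 Hi xs) TE nth_take.
have -> : (i : nat) = c.-1 by apply/eqP; rewrite eqn_leq Hi -ltnS prednK // ltn_ord.
exact: LE.
Qed.
End Tor.

Lemma card_sumb (T : finType) (P : pred T) : #|[set x | P x]| = (\sum_x (P x : nat))%N.
Proof.
rewrite cardsE -sum1_card big_mkcond /=; apply: eq_bigr => x _; by rewrite unfold_in; case: (P x).
Qed.

Section Core.
Variables (k r c d : nat).
Hypothesis hc : (0 < c)%N.
Variable Q : {set Key k c}.
Variable f : Key k c -> Sig r -> {ffun {x : Key k c | x \in Q} -> Sig r} -> bool.
Variable w1 : {dffun forall i : 'I_d.+1, {ffun 'I_(c + i - 1) -> {ffun Sig k -> Sig k}}}.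
Local Notation Om2 := {ffun 'I_(c + d) -> {ffun Sig k -> Sig r}}.

Definition w20 : Om2 := [ffun => [ffun => 0]].
Definition gk (x : Key k c) := derived_key ((w1, w20) : Omega k r c d) x.
Definition hv (w2 : Om2) x := tornado ((w1, w2) : Omega k r c d) x.
Definition ph (w2 : Om2) := restrQ Q ((w1, w2) : Omega k r c d).
Definition sel (w2 : Om2) y := f y (hv w2 y) (ph w2).
Definition Mx y := (\max_(phi : {ffun {x : Key k c | x \in Q} -> Sig r}) #|[set u : Sig r | f y u phi]|)%N.
Definition shift (w2 D : Om2) : Om2 := [ffun j => [ffun a => w2 j a + D j a]].

Lemma gkE w2 x : derived_key ((w1, w2) : Omega k r c d) x = gk x.
Proof. by []. Qed.

Lemma gk_inj : injective gk.
Proof. exact: derived_key_inj. Qed.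

Lemma hvE w2 x : hv w2 x = \sum_j w2 j (gk x j).
Proof. by rewrite /hv /tornado /simple_tab; apply: eq_bigr => j _; rewrite /gk ffunE. Qed.

Lemma hv_shift w2 D x : hv (shift w2 D) x = hv w2 x + \sum_j D j (gk x j).
Proof. by rewrite !hvE -big_split; apply: eq_bigr => j _; rewrite !ffunE. Qed.

Lemma shift_inj D : injective (shift ^~ D).
Proof.
move=> u v /ffunP E; apply/ffunP => j; apply/ffunP => a.
by move: (E j) => /ffunP /(_ a); rewrite !ffunE => /addIr.
Qed.

Lemma core (s : seq (Key k c)) : uniq s -> all (fun y => y \notin Q) s ->
  lin_indep (gk @: ([set y in s] :|: Q)) ->
  (#|[set w2 : Om2 | all (sel w2) s]| * #|Sig r| ^ size s <= #|Om2| * \prod_(y <- s) Mx y)%N.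
Proof.
elim: s => [|y0 s IH] /=.
  by move=> _ _ _; rewrite big_nil !muln1 max_card.
move=> /andP[y0s us] /andP[y0Q aQ] ind.
have ind' : lin_indep (gk @: ([set y in s] :|: Q)).
  apply: lin_indep_sub ind; apply: imsetS; apply/subsetP => x; rewrite !inE.
  by case/orP => ->; rewrite ?orbT.
have {}IH := IH us aQ ind'.
set A := [set w2 : Om2 | all (sel w2) s].
set B := [set w2 : Om2 | sel w2 y0 && all (sel w2) s].
suff step : (#|B| * #|Sig r| <= #|A| * Mx y0)%N.
  rewrite big_cons expnS mulnA (leq_trans (leq_mul step (leqnn _))) //.
  by rewrite mulnAC [X in (_ <= X)%N]mulnCA mulnC leq_mul2l IH orbT.
have Hy0 : gk y0 \in gk @: ([set y in y0 :: s] :|: Q).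
  by apply/imsetP; exists y0; rewrite // !inE eqxx.
have [eps Heps] := dual_vec ind Hy0.
pose Dl (v : Sig r) : Om2 := [ffun j => [ffun a => eps j a *: v]].
have hvD v w2 x : x \in [set y in y0 :: s] :|: Q ->
    hv (shift w2 (Dl v)) x = hv w2 x + ((x == y0)%:R : 'F_2) *: v.
  move=> Hx; rewrite hv_shift.
  have -> : \sum_j Dl v j (gk x j) = (\sum_j eps j (gk x j)) *: v.
    by rewrite scaler_suml; apply: eq_bigr => j _; rewrite !ffunE.
  rewrite Heps; last by apply/imsetP; exists x.
  by rewrite (inj_eq gk_inj).
have hvDo v w2 x : x \in [set y in s] :|: Q -> hv (shift w2 (Dl v)) x = hv w2 x.
  move=> Hx; rewrite hvD; last by move: Hx; rewrite !inE => /orP[->|->]; rewrite ?orbT.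
  have -> : (x == y0) = false.
    by apply/eqP => E; move: Hx; rewrite E !inE (negbTE y0s) (negbTE y0Q).
  by rewrite scale0r addr0.
have phD v w2 : ph (shift w2 (Dl v)) = ph w2.
  apply/ffunP => q; rewrite /ph /restrQ !ffunE.
  by apply: (hvDo v w2 (val q)); rewrite inE (valP q) orbT.
have AD v w2 : all (sel (shift w2 (Dl v))) s = all (sel w2) s.
  apply: eq_in_all => y Hy; rewrite /sel phD hvDo //.
  by rewrite inE inE Hy.
have y0D v w2 : hv (shift w2 (Dl v)) y0 = hv w2 y0 + v.
  by rewrite hvD ?eqxx ?scale1r // !inE eqxx.
have Cv v : #|[set w2 | f y0 (hv w2 y0 + v) (ph w2) && all (sel w2) s]| = #|B|.
  rewrite -(card_preimset B (@shift_inj (Dl v))); apply: eq_card => w2.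
  by rewrite !inE /sel AD y0D phD.
have E1 : (#|B| * #|Sig r| =
   \sum_(v : Sig r) #|[set w2 | f y0 (hv w2 y0 + v)%R (ph w2) && all (sel w2) s]|)%N.
  rewrite (eq_bigr (fun=> #|B|)); last by move=> v _; rewrite Cv.
  by rewrite sum_nat_const mulnC; congr (_ * _)%N; apply: eq_card.
rewrite E1; under eq_bigr => v _ do rewrite card_sumb.
rewrite exchange_big /= /A card_sumb big_distrl /=; apply: leq_sum => w2 _.
case: (all (sel w2) s); last by rewrite big1 => [|v _]; rewrite ?andbF.
rewrite mul1n; under eq_bigr => v _ do rewrite andbT.
rewrite -card_sumb.
have -> : #|[set v | f y0 (hv w2 y0 + v) (ph w2)]| = #|[set u | f y0 u (ph w2)]|.
  rewrite -[RHS](card_preimset _ (addrI (hv w2 y0))); apply: eq_card => v; by rewrite !inE.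
exact: (leq_bigmax (F := fun phi => #|[set u | f y0 u phi]|) (ph w2)).
Qed.

Definition tseq m (t : {ffun 'I_m -> Key k c}) := [seq t i | i <- enum 'I_m].

Lemma leq_ffact n n' m : (n <= n')%N -> (n ^_ m <= n' ^_ m)%N.
Proof.
elim: m n n' => [|m IH] n n' H; first by rewrite !ffactn0.
by rewrite !ffactnS leq_mul // IH // -!subn1 leq_sub2r.
Qed.

Lemma prod_tseq m (t : {ffun 'I_m -> Key k c}) (F : Key k c -> nat) :
  (\prod_(y <- tseq t) F y = \prod_i F (t i))%N.
Proof. by rewrite /tseq big_map big_enum. Qed.

Lemma count_main m (E : {set Om2}) n0 :
  (forall w2, w2 \in E -> Q \subset [set x | sel w2 x]) ->
  (forall w2, w2 \in E -> lin_indep (gk @: [set x | sel w2 x])) ->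
  (forall w2, w2 \in E -> n0 <= #|[set x | sel w2 x] :\: Q|)%N ->
  (#|E| * n0 ^_ m * #|Sig r| ^ m <= #|Om2| * (\sum_(x | x \notin Q) Mx x) ^ m)%N.
Proof.
move=> HQ Hind Hn0.
pose I (w2 : Om2) := [set t : {ffun 'I_m -> Key k c} in ffun_on ([set x | sel w2 x] :\: Q) | injectiveb t].
pose G := [set t : {ffun 'I_m -> Key k c} | [&& injectiveb t, all (fun y => y \notin Q) (tseq t) &
            lin_indep (gk @: ([set y in tseq t] :|: Q))]].
have stepA : (#|E| * n0 ^_ m <= \sum_(w2 in E) #|I w2|)%N.
  rewrite -sum_nat_const; apply: leq_sum => w2 Hw.
  by rewrite card_inj_ffuns_on card_ord leq_ffact // Hn0.
have stepB : (\sum_(w2 in E) #|I w2| <=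
    \sum_t (t \in G) * #|[set w2 : Om2 | all (sel w2) (tseq t)]|)%N.
  under eq_bigr => w2 _ do rewrite card_sumb.
  under [X in (_ <= X)%N]eq_bigr => t _ do rewrite card_sumb big_distrr /=.
  rewrite [X in (_ <= X)%N]exchange_big /= big_mkcond /=; apply: leq_sum => w2 _.
  case: ifP => Hw; last by [].
  apply: leq_sum => t _.
  rewrite inE; case Hb : (_ && _) => //=.
  move/andP: Hb => [/forallP Ht /injectiveP tinj].
  have Ht' i : t i \in [set x | sel w2 x] :\: Q by apply: Ht.
  have -> : all (sel w2) (tseq t).
    rewrite /tseq all_map; apply/allP => i _ /=.
    by move: (Ht' i); rewrite !inE => /andP[_].
  suff -> : t \in G by [].
  rewrite inE; apply/and3P; split; first by apply/injectiveP.
    rewrite /tseq all_map; apply/allP => i _ /=.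
    by move: (Ht' i); rewrite !inE => /andP[].
  apply: lin_indep_sub (Hind _ Hw); apply: imsetS; apply/subsetP => x.
  rewrite !inE => /orP[|xQ]; last by move/subsetP: (HQ _ Hw) => /(_ x xQ); rewrite inE.
  by case/mapP => i _ ->; move: (Ht' i); rewrite !inE => /andP[].
pose M' x := if x \in Q then 0%N else Mx x.
have stepC : ((\sum_t (t \in G) * #|[set w2 : Om2 | all (sel w2) (tseq t)]|) * #|Sig r| ^ m <=
     #|Om2| * \sum_(t : {ffun 'I_m -> Key k c}) \prod_i M' (t i))%N.
  rewrite big_distrl big_distrr /=; apply: leq_sum => t _.
  case HG : (t \in G); last by rewrite !mul0n.
  rewrite mul1n; move: HG; rewrite inE => /and3P[/injectiveP tinj aQ ind].
  have un : uniq (tseq t) by rewrite /tseq map_inj_uniq ?enum_uniq.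
  have := core un aQ ind.
  rewrite size_map size_enum_ord prod_tseq => H; apply: (leq_trans H).
  rewrite leq_mul2l; apply/orP; right; apply: eq_leq; apply: eq_bigr => i _.
  rewrite /M'; case: ifP => // tiQ.
  by move/allP: aQ => /(_ (t i)); rewrite /tseq map_f ?mem_enum // tiQ => /(_ isT).
have stepD : (\sum_(t : {ffun 'I_m -> Key k c}) \prod_i M' (t i) =
    (\sum_(x | x \notin Q) Mx x) ^ m)%N.
  rewrite -(bigA_distr_bigA (fun (i : 'I_m) (x : Key k c) => M' x)) /=.
  rewrite prod_nat_const card_ord; congr (_ ^ _)%N.
  by rewrite [RHS]big_mkcond; apply: eq_bigr => x _; rewrite /M'; case: (x \in Q).
rewrite -stepD; apply: leq_trans stepC; rewrite leq_mul2r; apply/orP; right.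
exact: leq_trans stepA stepB.
Qed.
End Core.

Section An.
Variable R : realType.

Lemma exp_partial (x : R) n : 0 <= x ->
  \sum_(m < n) x ^+ m / m`!%:R <= expR x.
Proof.
move=> x0.
have E : series (exp_coeff x) n = \sum_(m < n) x ^+ m / m`!%:R.
  by rewrite /series /= big_mkord.
rewrite -E; apply: nondecreasing_cvgn_le; last exact: is_cvg_series_exp_coeff.
move=> a b ab; rewrite /series /=.
apply: (nondecreasing_series (P := xpredT)) => //.
by move=> i _ _; rewrite /exp_coeff /= divr_ge0 // exprn_ge0.
Qed.
End An.
Section An2.
Variable R : realType.

Lemma anal (mu delta : R) n : 0 <= mu -> 0 < delta ->
  exists2 m, (m <= n)%N & mu ^+ m <= expR (delta * mu) / (1 + delta) ^+ n * (n ^_ m)%:R.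
Proof.
move=> mu0 d0.
set K := expR (delta * mu) / (1 + delta) ^+ n.
suff : [exists m : 'I_n.+1, mu ^+ m <= K * (n ^_ m)%:R].
  by case/existsP => m Hm; exists m => //; rewrite -ltnS ltn_ord.
apply: contraT; rewrite negb_exists => /forallP H.
have H' (m : 'I_n.+1) : K * (n ^_ m)%:R < mu ^+ m by rewrite ltNge; apply: H.
have d1 : 0 < 1 + delta by lra.
have : \sum_(m < n.+1) K * ('C(n, m)%:R * delta ^+ m) <
       \sum_(m < n.+1) (delta * mu) ^+ m / m`!%:R.
  apply: ltr_sum; first by apply/hasP; exists ord0; rewrite ?mem_index_enum.
  move=> m _.
  have fp : 0 < (m`!%:R : R) by rewrite ltr0n fact_gt0.
  have -> : K * ('C(n, m)%:R * delta ^+ m) = delta ^+ m * (K * (n ^_ m)%:R / m`!%:R).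
    by rewrite -bin_ffact natrM; field; rewrite gt_eqF.
  rewrite exprMn -[X in _ < X]mulrA ltr_pM2l ?exprn_gt0 // ltr_pM2r ?invr_gt0 //.
rewrite -mulr_sumr.
have -> : \sum_(m < n.+1) 'C(n, m)%:R * delta ^+ m = (1 + delta) ^+ n.
  by rewrite exprDn; apply: eq_bigr => i _; rewrite expr1n mul1r mulr_natl.
rewrite /K divfK ?expf_neq0 ?gt_eqF //.
have := @exp_partial R (delta * mu) n.+1 (mulr_ge0 (ltW d0) mu0).
move=> h1 h2; have := lt_le_trans h2 h1; by rewrite ltxx.
Qed.
End An2.
Section An3.
Variable R : realType.
Lemma fin (mu mu' S delta : R) (n q : nat) : 0 < delta -> mu = mu' + S ->
  q%:R <= S -> (1 + delta) * mu <= n%:R + q%:R ->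
  expR (delta * mu') / (1 + delta) ^+ n <=
  powR (expR delta / powR (1 + delta) (1 + delta)) mu.
Proof.
move=> d0 Emu qS Hn.
set L := ln (1 + delta).
have d1 : 0 < 1 + delta by lra.
have eL : expR L = 1 + delta by rewrite /L lnK // posrE.
have L0 : 0 <= L by apply: ln_ge0; lra.
have Ld : L <= delta by apply: le_ln1Dx; lra.
have -> : powR (1 + delta) (1 + delta) = expR ((1 + delta) * L).
  by rewrite /powR gt_eqF.
rewrite -expRB.
have -> : powR (expR (delta - (1 + delta) * L)) mu = expR (mu * (delta - (1 + delta) * L)).
  by rewrite /powR gt_eqF ?expR_gt0 // expRK.
have -> : (1 + delta) ^+ n = expR (n%:R * L) by rewrite expRM_natl eL.
rewrite -expRB ler_expR.
have h1 : 0 <= ((n%:R + q%:R) - (1 + delta) * mu) * L by apply: mulr_ge0; lra.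
have h2 : 0 <= q%:R * (delta - L) by apply: mulr_ge0; [exact: ler0n | lra].
have h3 : 0 <= delta * (S - q%:R) by apply: mulr_ge0; lra.
have E : mu * (delta - (1 + delta) * L) - (delta * mu' - n%:R * L) =
  ((n%:R + q%:R) - (1 + delta) * mu) * L + q%:R * (delta - L) + delta * (S - q%:R).
  by rewrite Emu; ring.
by rewrite -subr_ge0 E !addr_ge0.
Qed.
End An3.

Lemma pq_ge1 (R : realType) k r c (Q : {set Key k c})
  (f : Key k c -> Sig r -> {ffun {x : Key k c | x \in Q} -> Sig r} -> bool)
  (hfQ : forall q, q \in Q -> forall y phi, f q y phi) q :
  q \in Q -> 1 <= p_sel f R q.
Proof.
move=> Hq; have hR : (0 < #|Sig r|)%N by apply/card_gt0P; exists 0.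
rewrite /p_sel ler_pdivlMr ?ltr0n // mul1r ler_nat.
apply: leq_trans (leq_bigmax (F := fun phi => #|[set y : Sig r | f q y phi]|) [ffun => 0]).
by apply: subset_leq_card; apply/subsetP => y _; rewrite inE hfQ.
Qed.

Lemma per_w1 (R : realType) (k r c d : nat) (hc : (0 < c)%N)
  (Q : {set Key k c})
  (f : Key k c -> Sig r -> {ffun {x : Key k c | x \in Q} -> Sig r} -> bool)
  (hfQ : forall q, q \in Q -> forall y phi, f q y phi)
  (delta : R) (hdelta : 0 < delta)
  (w1 : {dffun forall i : 'I_d.+1, {ffun 'I_(c + i - 1) -> {ffun Sig k -> Sig k}}}) :
  (#|[set w2 : {ffun 'I_(c + d) -> {ffun Sig k -> Sig r}} |
      ((1 + delta) * mu_sel f R <= #|selected f ((w1, w2) : Omega k r c d)|%:R) &&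
      lin_indep (derived_key ((w1, w2) : Omega k r c d) @: selected f ((w1, w2) : Omega k r c d))]|%:R
   <= powR (expR delta / powR (1 + delta) (1 + delta)) (mu_sel f R) *
      #|{ffun 'I_(c + d) -> {ffun Sig k -> Sig r}}|%:R :> R).
Proof.
set E := [set w2 | _].
set B := powR _ _.
have hR : (0 < #|Sig r|)%N by apply/card_gt0P; exists 0.
set mu' := \sum_(x | x \notin Q) p_sel f R x.
set S := \sum_(x | x \in Q) p_sel f R x.
have Emu : mu_sel f R = mu' + S by rewrite /mu_sel (bigID (fun x => x \in Q)) addrC.
have QS : (#|Q|%:R <= S).
  rewrite /S -sumr_const; apply: ler_sum => q Hq; exact: pq_ge1.
have mu'0 : 0 <= mu'.
  by apply: sumr_ge0 => x _; rewrite /p_sel divr_ge0 ?ler0n.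
have mu'E : mu' = (\sum_(x | x \notin Q) Mx f x)%:R / #|Sig r|%:R.
  by rewrite natr_sum mulr_suml.
have B0 : 0 <= B by apply: powR_ge0.
case: (set_0Vmem E) => [-> | [w0 Hw0]].
  by rewrite cards0 mulr_ge0 ?ler0n.
have HQ w2 : w2 \in E -> Q \subset [set x | sel f w1 w2 x].
  by move=> _; apply/subsetP => q Hq; rewrite inE /sel hfQ.
have Hind w2 : w2 \in E -> lin_indep [set gk r w1 x | x : Key k c & sel f w1 w2 x].
  by rewrite inE => /andP[_ H]; exact: H.
have Hbig w2 : w2 \in E -> (1 + delta) * mu_sel f R <= #|[set x | sel f w1 w2 x]|%:R.
  by rewrite inE => /andP[H _]; exact: H.
case: (arg_minnP (fun w => #|[set x | sel f w1 w x] :\: Q|) Hw0) => ws Hws Hmin.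
set n0 := #|[set x | sel f w1 ws x] :\: Q|.
have hn0 : (1 + delta) * mu_sel f R <= n0%:R + #|Q|%:R.
  apply: le_trans (Hbig _ Hws) _; rewrite -natrD /n0 cardsD.
  move/setIidPr: (HQ _ Hws) => ->; rewrite subnK //.
  exact: subset_leq_card (HQ _ Hws).
have [m hm Hm] := anal n0 mu'0 hdelta.
have C := count_main hc m HQ Hind Hmin.
move: C; rewrite -(ler_nat R) !natrM !natrX -/n0.
have -> : (\sum_(x | x \notin Q) Mx f x)%:R = mu' * #|Sig r|%:R.
  by rewrite mu'E divfK // pnatr_eq0 -lt0n.
rewrite exprMn mulrA ler_pM2r ?exprn_gt0 ?ltr0n // => C.
have K0 := fin hdelta Emu QS hn0.
have ff : 0 < (n0 ^_ m)%:R :> R by rewrite ltr0n ffact_gt0.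
rewrite -(ler_pM2r ff); apply: (le_trans C).
have O0 : 0 < #|{ffun 'I_(c + d) -> {ffun Sig k -> Sig r}}|%:R :> R.
  by rewrite ltr0n; apply/card_gt0P; exists [ffun => [ffun => 0]].
rewrite [B * _]mulrC -mulrA ler_pM2l //.
by apply: le_trans Hm _; rewrite ler_pM2r.
Qed.

Unset Implicit Arguments. Set Strict Implicit.

Theorem lemma1p6 (R : realType) (k r c d : nat) (hk : (8 <= k)%N)
  (hc : (0 < c)%N) (hd : (1 <= d)%N)
  (Q : {set Key k c})
  (f : Key k c -> Sig r -> {ffun {x : Key k c | x \in Q} -> Sig r} -> bool)
  (hfQ : forall q, q \in Q -> forall y phi, f q y phi)
  (delta : R) (hdelta : 0 < delta) :
  Pr R [pred w : Omega k r c d |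
         ((1 + delta) * mu_sel f R <= #|selected f w|%:R) &&
         lin_indep (derived_key w @: selected f w)]
  <= powR (expR delta / powR (1 + delta) (1 + delta)) (mu_sel f R).
Proof.
rewrite /Pr.
set B := powR _ _.
set P := [pred w | _].
pose Om1 := {dffun forall i : 'I_d.+1, {ffun 'I_(c + i - 1) -> {ffun Sig k -> Sig k}}}.
pose Om2 := {ffun 'I_(c + d) -> {ffun Sig k -> Sig r}}.
have -> : #|[set w | P w]| = (\sum_(w1 : Om1) #|[set w2 : Om2 | P ((w1, w2) : Omega k r c d)]|)%N.
  rewrite card_sumb; under [RHS]eq_bigr => w1 _ do rewrite card_sumb.
  by rewrite pair_bigA /=; apply: eq_bigr => -[w1 w2] _.
have cO : #|Omega k r c d| = (#|Om1| * #|Om2|)%N by rewrite -card_prod.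
have O1 : (0 < #|Om1|)%N.
  by apply/card_gt0P; exists [ffun i => [ffun => [ffun => 0]]].
have O2 : (0 < #|Om2|)%N by apply/card_gt0P; exists [ffun => [ffun => 0]].
rewrite cO natrM ler_pdivrMr ?mulr_gt0 ?ltr0n // natr_sum.
apply: le_trans (ler_sum _ (fun w1 _ => per_w1 hc hfQ hdelta w1)) _.
rewrite -mulr_sumr -natr_sum sum_nat_const natrM.
by rewrite /B; apply: lexx.
Qed.
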